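(* Let $\mathcal T$ be a triangulated category, $X\in\mathcal T$ and $n\ge0$ such that $\operatorname{thick}^{n+1}(X)=\mathcal T$. Put $Y=X\oplus\Sigma^nX$. Then $\hom^p(Y)\subseteq\operatorname{thick}^p(Y)$ for all $p\ge0$. Consequently, if moreover every object of $\mathcal T$ is homologically finite, then $Y$ is a finitistic generator of $\mathcal T$.
   Context: $\Sigma$ denotes the suspension. With $\operatorname{add}\mathcal X$ the smallest full subcategory containing $\mathcal X$ closed under finite direct sums and direct summands, set $\operatorname{thick}^0(X)=\operatorname{add}\varnothing$, $\operatorname{thick}^1(X)=\operatorname{add}\{\Sigma^iX\mid i\in\mathbb Z\}$, and for $n>1$, $\operatorname{thick}^n(X)=\operatorname{add}\{\operatorname{cone}\varphi\mid\varphi\colon U\to V,\ U\in\operatorname{thick}^1(X),\ V\in\operatorname{thick}^{n-1}(X)\}$. For objects $X,Y$ and $n\ge0$, write $h(X,Y)\le n$ if for all $i,j\in\mathbb Z$: $\operatorname{Hom}(X,\Sigma^iY)\ne0\ne\operatorname{Hom}(X,\Sigma^jY)$ implies $|i-j|<n$; $\hom^n(X):=\{Z\mid h(X,Z)\le n\}$. $X$ is homologically finite if for every $Z$ there is $n$ with $h(X,Z)\le n$. $X$ is a finitistic generator if $X$ is homologically finite and $\hom^p(X)\subseteq\operatorname{thick}^p(X)$ for all $p\ge0$. *)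

(* Defs.v *)
From HB Require Import structures.
From mathcomp Require Import all_boot all_order all_algebra.
Set Implicit Arguments. Unset Strict Implicit. Unset Printing Implicit Defensive.
Import Order.TTheory GRing.Theory Num.Theory.
Local Open Scope ring_scope.

Record AddCat := {
  Ob :> Type;
  Hom : Ob -> Ob -> zmodType;
  comp : forall X Y Z : Ob, Hom Y Z -> Hom X Y -> Hom X Z;
  idm : forall X : Ob, Hom X X;
  comp_assoc : forall (W X Y Z : Ob) (h : Hom Y Z) (g : Hom X Y) (f : Hom W X),
      comp h (comp g f) = comp (comp h g) f;
  comp_idl : forall (X Y : Ob) (f : Hom X Y), comp (idm Y) f = f;
  comp_idr : forall (X Y : Ob) (f : Hom X Y), comp f (idm X) = f;
  comp_addl : forall (X Y Z : Ob) (g1 g2 : Hom Y Z) (f : Hom X Y),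
      comp (g1 + g2) f = comp g1 f + comp g2 f;
  comp_addr : forall (X Y Z : Ob) (g : Hom Y Z) (f1 f2 : Hom X Y),
      comp g (f1 + f2) = comp g f1 + comp g f2;
  zero_ob : Ob;
  zero_obP : idm zero_ob = 0;
  biprod_exists : forall A B : Ob, exists D : Ob,
      exists (i1 : Hom A D) (p1 : Hom D A) (i2 : Hom B D) (p2 : Hom D B),
      [/\ comp p1 i1 = idm A, comp p2 i2 = idm B, comp p2 i1 = 0,
          comp p1 i2 = 0 & comp i1 p1 + comp i2 p2 = idm D]
}.
Arguments comp {a X Y Z}.
Arguments idm {a}.
Arguments zero_ob {a}.

Section AddDefs.
Variable C : AddCat.

Definition is_iso (X Y : C) (f : Hom X Y) : Prop :=
  exists g : Hom Y X, comp g f = idm X /\ comp f g = idm Y.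

Definition is_biproduct (A B D : C) : Prop :=
  exists (i1 : Hom A D) (p1 : Hom D A) (i2 : Hom B D) (p2 : Hom D B),
    [/\ comp p1 i1 = idm A, comp p2 i2 = idm B, comp p2 i1 = 0,
        comp p1 i2 = 0 & comp i1 p1 + comp i2 p2 = idm D].

Definition is_zero_ob (Z : C) : Prop := idm Z = 0.

(* add S : smallest full subcategory containing S, closed under finite direct
   sums (the empty sum being a zero object) and direct summands. *)
Inductive addC (S : C -> Prop) : C -> Prop :=
| addC_base X : S X -> addC S X
| addC_zero Z : is_zero_ob Z -> addC S Z
| addC_sum A B D : addC S A -> addC S B -> is_biproduct A B D -> addC S D
| addC_summand A B D : addC S D -> is_biproduct A B D -> addC S A.
End AddDefs.

Record Triang (C : AddCat) := {
  Sig : C -> C;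
  Sigm : forall X Y : C, Hom X Y -> Hom (Sig X) (Sig Y);
  Sigm_id : forall X : C, Sigm (idm X) = idm (Sig X);
  Sigm_comp : forall (X Y Z : C) (g : Hom Y Z) (f : Hom X Y),
      Sigm (comp g f) = comp (Sigm g) (Sigm f);
  Sigm_add : forall (X Y : C) (f g : Hom X Y), Sigm (f + g) = Sigm f + Sigm g;
  Sigm_bij : forall X Y : C, bijective (@Sigm X Y);
  Siginv : C -> C;
  Siginv_iso : forall Y : C, exists f : Hom (Sig (Siginv Y)) Y, is_iso f;
  dist : forall X Y Z : C, Hom X Y -> Hom Y Z -> Hom Z (Sig X) -> Prop;
  dist_iso : forall (X Y Z X' Y' Z' : C)
      (f : Hom X Y) (g : Hom Y Z) (h : Hom Z (Sig X))
      (f' : Hom X' Y') (g' : Hom Y' Z') (h' : Hom Z' (Sig X'))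
      (a : Hom X X') (b : Hom Y Y') (c : Hom Z Z'),
      dist f g h -> is_iso a -> is_iso b -> is_iso c ->
      comp b f = comp f' a -> comp c g = comp g' b ->
      comp (Sigm a) h = comp h' c -> dist f' g' h';
  dist_id : forall X : C,
      dist (idm X) (0 : Hom X zero_ob) (0 : Hom zero_ob (Sig X));
  dist_ext : forall (X Y : C) (f : Hom X Y),
      exists (Z : C) (g : Hom Y Z) (h : Hom Z (Sig X)), dist f g h;
  dist_rot : forall (X Y Z : C) (f : Hom X Y) (g : Hom Y Z) (h : Hom Z (Sig X)),
      dist f g h <-> dist g h (- Sigm f);
  dist_morph : forall (X Y Z X' Y' Z' : C)
      (f : Hom X Y) (g : Hom Y Z) (h : Hom Z (Sig X))
      (f' : Hom X' Y') (g' : Hom Y' Z') (h' : Hom Z' (Sig X'))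
      (a : Hom X X') (b : Hom Y Y'),
      dist f g h -> dist f' g' h' -> comp b f = comp f' a ->
      exists c : Hom Z Z', comp c g = comp g' b /\ comp (Sigm a) h = comp h' c;
  dist_oct : forall (X Y Z Z' X' Y' : C) (f : Hom X Y) (g : Hom Y Z)
      (f1 : Hom Y Z') (f2 : Hom Z' (Sig X))
      (g1 : Hom Z X') (g2 : Hom X' (Sig Y))
      (h1 : Hom Z Y') (h2 : Hom Y' (Sig X)),
      dist f f1 f2 -> dist g g1 g2 -> dist (comp g f) h1 h2 ->
      exists (u : Hom Z' Y') (v : Hom Y' X'),
        [/\ comp u f1 = comp h1 g, comp h2 u = f2, comp v h1 = g1,
            comp g2 v = comp (Sigm f) h2 & dist u v (comp (Sigm f1) g2)]
}.

Arguments Sig {C} t _ : rename.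
Arguments Sigm {C} t {X Y} _ : rename.
Arguments Siginv {C} t _ : rename.
Arguments dist {C} t {X Y Z} _ _ _ : rename.

Section TriDefs.
Variables (C : AddCat) (T : Triang C).

Definition Sigz (i : int) (X : C) : C :=
  match i with
  | Posz n => iter n (Sig T) X
  | Negz n => iter n.+1 (Siginv T) X
  end.

Definition susp_class (X : C) : C -> Prop := fun Z => exists i : int, Z = Sigz i X.

Definition thick1 (X : C) : C -> Prop := addC (susp_class X).

Definition cone_class (X : C) (P : C -> Prop) : C -> Prop := fun W =>
  exists (U V : C) (phi : Hom U V) (g : Hom V W) (h : Hom W (Sig T U)),
    thick1 X U /\ P V /\ dist T phi g h.

Fixpoint thick (n : nat) (X : C) {struct n} : C -> Prop :=
  match n with
  | 0 => addC (fun _ : C => False)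
  | m.+1 => match m with
            | 0 => thick1 X
            | _ => addC (cone_class X (thick m X))
            end
  end.

Definition nonzero_hom (X Y : C) : Prop := exists f : Hom X Y, f != 0.

Definition h_le (X Y : C) (n : nat) : Prop :=
  forall i j : int, nonzero_hom X (Sigz i Y) -> nonzero_hom X (Sigz j Y) ->
    (`|i - j| < n)%N.

Definition hom_class (n : nat) (X : C) : C -> Prop := fun Z => h_le X Z n.

Definition homologically_finite (X : C) : Prop :=
  forall Z : C, exists n : nat, h_le X Z n.

Definition finitistic_generator (X : C) : Prop :=
  homologically_finite X /\
  forall (p : nat) (Z : C), hom_class p X Z -> thick p X Z.
End TriDefs.

(* Main.v *)
Require Import Defs.
From mathcomp Require Import all_boot all_order all_algebra.
Set Implicit Arguments. Unset Strict Implicit. Unset Printing Implicit Defensive.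
Import Order.TTheory GRing.Theory Num.Theory.
Local Open Scope ring_scope.

Section S.
Variables (C : AddCat) (T : Triang C).
Local Notation Hom := (@Defs.Hom C).
Local Notation comp := (@Defs.comp C _ _ _).

Lemma comp0l (X Y Z : C) (f : Hom X Y) : comp (0 : Hom Y Z) f = 0.
Proof.
apply: (addrI (comp (0 : Hom Y Z) f)).
by rewrite -comp_addl !addr0.
Qed.

Lemma comp0r (X Y Z : C) (g : Hom Y Z) : comp g (0 : Hom X Y) = 0.
Proof.
apply: (addrI (comp g (0 : Hom X Y))).
by rewrite -comp_addr !addr0.
Qed.

Lemma compNl (X Y Z : C) (g : Hom Y Z) (f : Hom X Y) : comp (- g) f = - comp g f.
Proof.
apply: (addIr (comp g f)).
by rewrite -comp_addl !addNr comp0l.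
Qed.

Lemma Sigm0 (X Y : C) : Sigm T (0 : Hom X Y) = 0.
Proof.
apply: (addrI (Sigm T (0 : Hom X Y))).
by rewrite -Sigm_add !addr0.
Qed.

Lemma Sigm_inj (X Y : C) : injective (@Sigm C T X Y).
Proof. exact: bij_inj (Sigm_bij T X Y). Qed.

Lemma Sigm_surj (X Y : C) (g : Hom (Sig T X) (Sig T Y)) : exists f, Sigm T f = g.
Proof.
case: (Sigm_bij T X Y) => h _ hK. by exists (h g); rewrite hK.
Qed.

Lemma Sigm_eq0 (X Y : C) (f : Hom X Y) : Sigm T f = 0 -> f = 0.
Proof. by rewrite -(Sigm0 X Y) => /Sigm_inj. Qed.

Lemma iso_cancel (X Y W : C) (e : Hom X Y) : is_iso e ->
  exists e' : Hom Y X, comp e' e = idm X /\ comp e e' = idm Y.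
Proof. by []. Qed.

Lemma Sigz_succ_iso (Z : C) (i : int) :
  exists e : Hom (Sig T (Sigz T i Z)) (Sigz T (i + 1) Z), is_iso e.
Proof.
case: i => [m|m].
- have -> : (Posz m + 1 = Posz m.+1)%R by rewrite -addn1.
  exists (idm _); exists (idm _); by rewrite comp_idl.
- case: m => [|k].
  + have -> : (Negz 0 + 1 = Posz 0)%R by [].
    exact: Siginv_iso.
  + have -> : (Negz k.+1 + 1 = Negz k)%R.
      by rewrite !NegzE -addn1 PoszD opprD addrNK.
    exact: Siginv_iso.
Qed.


Lemma compNr (X Y Z : C) (g : Hom Y Z) (f : Hom X Y) : comp g (- f) = - comp g f.
Proof.
apply: (addIr (comp g f)).
by rewrite -comp_addr !addNr comp0r.
Qed.

Definition triv (A B : C) := forall f : Hom A B, f = 0.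

Lemma triv_iso (A A' B B' : C) (a : Hom A' A) (b : Hom B' B) :
  is_iso a -> is_iso b -> triv A B -> triv A' B'.
Proof.
move=> [a' [Ha1 Ha2]] [b' [Hb1 Hb2]] H f.
have -> : f = comp b' (comp (comp b (comp f a')) a).
  rewrite !comp_assoc Hb1 comp_idl -comp_assoc Ha1 comp_idr //.
by rewrite (H (comp b (comp f a'))) comp0l comp0r.
Qed.

Lemma iso_id (A : C) : is_iso (idm A).
Proof. by exists (idm A); rewrite comp_idl. Qed.

Lemma triv_zero (A B : C) : is_zero_ob A -> triv A B.
Proof. move=> HA f. by rewrite -(comp_idr f) HA comp0r. Qed.

Lemma triv_biprod (A B D M : C) : is_biproduct A B D -> triv A M -> triv B M -> triv D M.
Proof.
move=> [i1 [p1 [i2 [p2 [_ _ _ _ Hs]]]]] HA HB f.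
rewrite -(comp_idr f) -Hs comp_addr !comp_assoc.
by rewrite (HA (comp f i1)) (HB (comp f i2)) !comp0l addr0.
Qed.

Lemma triv_summand (A B D M : C) : is_biproduct A B D -> triv D M -> triv A M.
Proof.
move=> [i1 [p1 [i2 [p2 [H1 _ _ _ _]]]]] HD f.
by rewrite -(comp_idr f) -H1 comp_assoc (HD (comp f p1)) comp0l.
Qed.

Definition Vz (Z W : C) := forall i, triv W (Sigz T i Z).

Lemma Vz_Sig (Z W : C) : Vz Z W -> Vz Z (Sig T W).
Proof.
move=> H i.
have := Sigz_succ_iso Z (i - 1); rewrite subrK => -[e He].
have He' := He; case: He' => e' [He1 He2].
have He'i : is_iso e' by exists e.
apply: (triv_iso (iso_id _) He'i) => f.
have [g <-] := Sigm_surj f.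
by rewrite (H _ g) Sigm0.
Qed.

Lemma Vz_Siginv (Z W : C) : Vz Z W -> Vz Z (Siginv T W).
Proof.
move=> H i f.
have [e He] := Sigz_succ_iso Z i.
have [s Hs] := Siginv_iso T W.
apply: Sigm_eq0.
exact: (triv_iso Hs He (H (i + 1))).
Qed.

Lemma Vz_Sigz (Z X : C) (j : int) : Vz Z X -> Vz Z (Sigz T j X).
Proof.
move=> H; case: j => m /=.
- elim: m => [|m IH] //=. exact: Vz_Sig.
- elim: m => [|m IH] /=. exact: Vz_Siginv.
  exact: Vz_Siginv.
Qed.

Lemma dist_zero (N : C) :
  dist T (0 : Hom zero_ob N) (- idm N) (0 : Hom N (Sig T zero_ob)).
Proof.
have [e [e' [He1 He2]]] := Siginv_iso T N.
have H := dist_id T (Siginv T N).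
move/dist_rot: H => H. move/dist_rot: H.
rewrite Sigm_id Sigm0 oppr0 => H.
apply: (dist_iso H (iso_id zero_ob)) (_ : is_iso e) (_ : is_iso e) _ _ _.
- by exists e'.
- by exists e'.
- by rewrite comp0l comp0r.
- by rewrite compNl compNr comp_idl comp_idr.
- by rewrite !comp0l comp0r.
Qed.

Lemma coh (U V W N : C) (phi : Hom U V) (g : Hom V W) (h : Hom W (Sig T U))
  (f : Hom W N) : dist T phi g h -> comp f g = 0 -> exists f', f = comp f' h.
Proof.
move=> /dist_rot Hd Hfg.
have Hc : comp f g = comp (0 : Hom zero_ob N) (0 : Hom V zero_ob) by rewrite comp0l.
have [c [Hc1 _]] := dist_morph Hd (dist_zero N) Hc.
exists (- c). by rewrite compNl Hc1 compNl comp_idl opprK.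
Qed.

Lemma Vz_cone (Z U V W : C) (phi : Hom U V) (g : Hom V W) (h : Hom W (Sig T U)) :
  dist T phi g h -> Vz Z U -> Vz Z V -> Vz Z W.
Proof.
move=> Hd HU HV i f.
have [f' ->] := coh Hd (HV i (comp f g)).
by rewrite (Vz_Sig HU f') comp0l.
Qed.

Lemma Vz_addC (Z : C) (S : C -> Prop) (W : C) :
  (forall W, S W -> Vz Z W) -> Defs.addC S W -> Vz Z W.
Proof.
move=> HS; elim => {W}.
- exact: HS.
- by move=> W HW i; apply: triv_zero.
- by move=> A B D _ HA _ HB Hb i; apply: (triv_biprod Hb).
- by move=> A B D _ HD Hb i; apply: (triv_summand Hb).
Qed.

Lemma Vz_thick (Z X : C) (m : nat) (W : C) :
  Vz Z X -> thick T m.+1 X W -> Vz Z W.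
Proof.
move=> HX.
have H1 : forall W, thick1 T X W -> Vz Z W.
  move=> W'; apply: Vz_addC => W0 [j ->]; exact: Vz_Sigz.
elim: m W => [|m IH] W; first exact: H1.
move=> /= HW; apply: (Vz_addC _ HW) => W0 [U [V [phi [g [h [HU [HV Hd]]]]]]].
exact: (Vz_cone Hd (H1 _ HU) (IH _ HV)).
Qed.


Lemma biprod_Sig (A B D : C) : is_biproduct A B D -> is_biproduct (Sig T A) (Sig T B) (Sig T D).
Proof.
move=> [i1 [p1 [i2 [p2 [H1 H2 H3 H4 H5]]]]].
exists (Sigm T i1), (Sigm T p1), (Sigm T i2), (Sigm T p2).
by split; rewrite -!Sigm_comp ?H1 ?H2 ?H3 ?H4 ?Sigm0 ?Sigm_id // -Sigm_add H5 Sigm_id.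
Qed.

Lemma biprod_iso (A B D A' B' D' : C) (a : Hom A' A) (b : Hom B' B) (d : Hom D' D) :
  is_iso a -> is_iso b -> is_iso d -> is_biproduct A B D -> is_biproduct A' B' D'.
Proof.
move=> [a' [Ha1 Ha2]] [b' [Hb1 Hb2]] [d' [Hd1 Hd2]].
move=> [i1 [p1 [i2 [p2 [H1 H2 H3 H4 H5]]]]].
exists (comp d' (comp i1 a)), (comp a' (comp p1 d)), (comp d' (comp i2 b)), (comp b' (comp p2 d)).
split.
- by rewrite !comp_assoc -(comp_assoc (comp a' p1)) Hd2 comp_idr -(comp_assoc a') H1 comp_idr Ha1.
- by rewrite !comp_assoc -(comp_assoc (comp b' p2)) Hd2 comp_idr -(comp_assoc b') H2 comp_idr Hb1.
- by rewrite !comp_assoc -(comp_assoc (comp b' p2)) Hd2 comp_idr -(comp_assoc b') H3 comp0r comp0l.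
- by rewrite !comp_assoc -(comp_assoc (comp a' p1)) Hd2 comp_idr -(comp_assoc a') H4 comp0r comp0l.
- rewrite !comp_assoc -(comp_assoc (comp d' i1)) -(comp_assoc (comp d' i2)).
  rewrite Ha2 Hb2 !comp_idr -comp_addl -!comp_assoc -comp_addr H5 comp_idr; exact: Hd1.
Qed.

Lemma biprod_unSig (A B D : C) : is_biproduct (Sig T A) (Sig T B) (Sig T D) -> is_biproduct A B D.
Proof.
move=> [i1 [p1 [i2 [p2 [H1 H2 H3 H4 H5]]]]].
have [j1 Hj1] := Sigm_surj i1. have [q1 Hq1] := Sigm_surj p1.
have [j2 Hj2] := Sigm_surj i2. have [q2 Hq2] := Sigm_surj p2.
subst.
exists j1, q1, j2, q2; split; apply: Sigm_inj;
  by rewrite ?Sigm_add !Sigm_comp ?Sigm_id ?Sigm0.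
Qed.

Lemma biprod_Siginv (A B D : C) : is_biproduct A B D ->
  is_biproduct (Siginv T A) (Siginv T B) (Siginv T D).
Proof.
move=> H; apply: biprod_unSig.
have [a Ha] := Siginv_iso T A. have [b Hb] := Siginv_iso T B.
have [d Hd] := Siginv_iso T D.
exact: (biprod_iso Ha Hb Hd H).
Qed.

Lemma biprod_Sigz (A B D : C) (j : int) : is_biproduct A B D ->
  is_biproduct (Sigz T j A) (Sigz T j B) (Sigz T j D).
Proof.
move=> H; case: j => m /=.
- elim: m => [|m IH] //=. exact: biprod_Sig.
- elim: m => [|m IH] /=. exact: biprod_Siginv.
  exact: biprod_Siginv.
Qed.

Lemma addC_mono (S S' : C -> Prop) (W : C) :
  (forall W, S W -> Defs.addC S' W) -> Defs.addC S W -> Defs.addC S' W.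
Proof.
move=> HS; elim => {W}.
- exact: HS.
- by move=> W HW; apply: addC_zero.
- by move=> A B D _ HA _ HB Hb; apply: (addC_sum HA HB Hb).
- by move=> A B D _ HD Hb; apply: (addC_summand HD Hb).
Qed.

Lemma thick_gen (X X2 Y : C) (m : nat) (W : C) : is_biproduct X X2 Y ->
  thick T m.+1 X W -> thick T m.+1 Y W.
Proof.
move=> Hb.
have H1 : forall W, thick1 T X W -> thick1 T Y W.
  move=> W'; apply: addC_mono => W0 [j ->].
  apply: (addC_summand (addC_base _) (biprod_Sigz j Hb)).
  by exists j.
elim: m W => [|m IH] W; first exact: H1.
move=> /= HW; apply: (addC_mono _ HW) => W0 [U [V [phi [g [h [HU [HV Hd]]]]]]].
apply: addC_base.
exists U, V, phi, g, h; split; [exact: H1 | split; [exact: IH | exact: Hd]].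
Qed.

Lemma thick_succ (Y : C) (m : nat) (W : C) : thick T m.+1 Y W -> thick T m.+2 Y W.
Proof.
move=> HW /=; apply: addC_base.
exists zero_ob, W, 0, (- idm W), 0; split; last split => //.
- apply: addC_zero; exact: zero_obP.
- exact: dist_zero.
Qed.

Lemma thick_le (Y : C) (n p : nat) (W : C) : (n < p)%N -> thick T n.+1 Y W -> thick T p Y W.
Proof.
move=> Hp; rewrite -(subnKC Hp).
elim: (p - n.+1)%N => [|k IH]; first by rewrite addn0.
by move=> H; rewrite addnS; apply: thick_succ; apply: IH.
Qed.

Lemma nz_Sig (A Z : C) (k : int) (g : Hom A (Sigz T k Z)) : g != 0 ->
  exists g' : Hom (Sig T A) (Sigz T (k + 1) Z), g' != 0.
Proof.
move=> Hg.
have [e [e' [He1 He2]]] := Sigz_succ_iso Z k.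
exists (comp e (Sigm T g)); apply/eqP => H0; move/eqP: Hg; apply.
apply: Sigm_eq0. by rewrite -(comp_idl (Sigm T g)) -He1 -comp_assoc H0 comp0r.
Qed.

Lemma nz_shift (X Z : C) (i : int) (n : nat) (f : Hom X (Sigz T i Z)) : f != 0 ->
  exists g : Hom (Sigz T (Posz n) X) (Sigz T (i + Posz n) Z), g != 0.
Proof.
move=> Hf; elim: n => [|n [g Hg]].
- rewrite addr0; by exists f.
- have [g' Hg'] := nz_Sig Hg.
  have -> : (i + Posz n.+1 = i + n + 1)%R by rewrite -addn1 PoszD addrA.
  by exists g'.
Qed.

End S.

Local Close Scope ring_scope.
Unset Implicit Arguments.

Theorem mainTheorem4 (C : AddCat) (T : Triang C) (X : C) (n : nat) :
  (forall Z : C, thick T n.+1 X Z) ->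
  forall Y : C, is_biproduct X (Sigz T (Posz n) X) Y ->
  (forall (p : nat) (Z : C), hom_class T p Y Z -> thick T p Y Z) /\
  ((forall Z : C, homologically_finite T Z) -> finitistic_generator T Y).
Proof.
move=> Hall Y Hb.
have Part : forall (p : nat) (Z : C), hom_class T p Y Z -> thick T p Y Z.
  move=> p Z Hh.
  case: (leqP p n) => Hp; last exact: (thick_le Hp (thick_gen Hb (Hall Z))).
  have HX : Vz T Z X.
    move=> i f; apply/eqP; case: (eqVneq f 0%R) => // Hf.
    case: Hb => [i1 [p1 [i2 [p2 [H1 H2 _ _ _]]]]].
    have [g Hg] := @nz_shift C T X Z i n f Hf.
    have nz1 : nonzero_hom Y (Sigz T i Z).
      exists (Defs.comp f p1); apply/eqP => H0; move/eqP: Hf; apply.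
      by rewrite -(comp_idr f) -H1 comp_assoc H0 comp0l.
    have nz2 : nonzero_hom Y (Sigz T (i + Posz n)%R Z).
      exists (Defs.comp g p2); apply/eqP => H0; move/eqP: Hg; apply.
      by rewrite -(comp_idr g) -H2 comp_assoc H0 comp0l.
    have := Hh _ _ nz1 nz2.
    rewrite GRing.opprD GRing.addrA GRing.addrN GRing.add0r abszN absz_nat => Hlt.
    by move: (leq_trans Hlt Hp); rewrite ltnn.
  have HZ : Vz T Z Z := Vz_thick HX (Hall Z).
  have Hz : is_zero_ob Z := HZ (Posz 0) (idm Z).
  by case: p {Hh Hp} => [|[|p]] /=; apply: addC_zero.
split => // Hfin; split => //; exact: Hfin.
Qed.
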